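(* Let $G$ be a finite simple graph without isolated vertices, with vertices $v_1,\dots,v_n$, and let $f_j=\mathrm{dp}(v_j)$ for $1\le j\le n$ (so $(f_1,\dots,f_n)$ is, up to ordering, the degree polynomial sequence of $G$). Then: (a) $\sum_{j=1}^{n} sc(f_j)$ is even; (b) for every vertex $v$ of $G$ and every term $kx^{i}$ of $\mathrm{dp}(v)$ with $k\neq 0$, there are at least $k$ distinct vertices $w_1,\dots,w_k$ of $G$, all distinct from $v$, such that $sc(\mathrm{dp}(w_1))=\dots=sc(\mathrm{dp}(w_k))=i$; (c) both $\sum_{j:\ sc(f_j)\text{ odd}} sec(f_j)$ and $\sum_{j:\ sc(f_j)\text{ even}} sec(f_j)$ are even integers.
   Context: For a vertex $v$ of a simple graph $G$, the degree polynomial $\mathrm{dp}(v)\in\mathbb{Z}[x]$ is the polynomial in which the coefficient of $x^{i}$ is the number of neighbors of $v$ that have degree $i$ in $G$ (so $\mathrm{dp}(v)=0$ if $v$ is isolated). For a polynomial $f=\sum_i a_i x^i$ with nonnegative integer coefficients, $sc(f)$ denotes the sum of all its coefficients (with $sc(0)=0$), $sec(f)$ the sum of the coefficients $a_i$ with $i$ even, and $soc(f)$ the sum of the coefficients $a_i$ with $i$ odd. The degree polynomial sequence of $G$ is the list of degree polynomials of its vertices arranged in non-increasing order with respect to a fixed total order on polynomials. *)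

(* Defs.v *)
From HB Require Import structures.
From mathcomp Require Import all_boot all_order all_algebra.
Set Implicit Arguments. Unset Strict Implicit. Unset Printing Implicit Defensive.
Import Order.TTheory GRing.Theory Num.Theory.
Local Open Scope ring_scope.

Definition simple_graph (T : finType) (e : rel T) : Prop :=
  symmetric e /\ irreflexive e.

Definition deg (T : finType) (e : rel T) (v : T) : nat := #|[set w | e v w]|.

Definition dp (T : finType) (e : rel T) (v : T) : {poly int} :=
  \sum_(w in T | e v w) 'X^(deg e w).

Definition sc (f : {poly int}) : int := \sum_(i < size f) f`_i.
Definition sec (f : {poly int}) : int := \sum_(i < size f | ~~ odd i) f`_i.
Definition soc (f : {poly int}) : int := \sum_(i < size f | odd i) f`_i.

(* Main.v *)
Require Import Defs.
From HB Require Import structures.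
From mathcomp Require Import all_boot all_order all_algebra.
Import Order.TTheory GRing.Theory Num.Theory.
Local Open Scope ring_scope.

Lemma dvd2z (n : nat) : (2 %| (n : int))%Z = (2 %| n)%N.
Proof. by []. Qed.

Section S.
Variables (T : finType) (e : rel T).
Hypothesis he : simple_graph e.

Lemma pair_even (F : T -> T -> nat) :
  (forall v w, F v w = F w v) -> (forall v, F v v = 0%N) ->
  (2 %| \sum_v \sum_w F v w)%N.
Proof.
move=> Fs F0.
pose r := fun x : T => nat_of_ord (enum_rank x).
have split : forall v w, F v w = ((r w < r v)%N * F v w + (r v < r w)%N * F v w)%N.
  move=> v w; case: (ltngtP (r w) (r v)) => h; rewrite ?mul1n ?mul0n ?addn0 //.
  by have -> : w = v by apply: enum_rank_inj; apply: val_inj.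
have -> : (\sum_v \sum_w F v w = \sum_v \sum_w (r w < r v)%N * F v w
           + \sum_v \sum_w (r v < r w)%N * F v w)%N.
  rewrite -big_split /=; apply: eq_bigr => v _.
  by rewrite -big_split /=; apply: eq_bigr => w _.
rewrite [X in (_ + X)%N]exchange_big /=.
have -> : (\sum_w \sum_v (r v < r w)%N * F v w = \sum_v \sum_w (r w < r v)%N * F v w)%N.
  by apply: eq_bigr => v _; apply: eq_bigr => w _; rewrite Fs.
by rewrite addnn dvdn2 odd_double.
Qed.

Lemma deg_sum v : deg e v = (\sum_(w | e v w) 1)%N.
Proof. by rewrite /deg sum1_card cardsE. Qed.

Lemma deg_lt v : (deg e v < #|T|.+1)%N.
Proof. by rewrite ltnS /deg max_card. Qed.

Lemma coef_dp v i : (dp e v)`_i = \sum_(w | e v w) (i == deg e w)%:R.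
Proof. by rewrite /dp coef_sum; apply: eq_bigr => w _; rewrite coefXn. Qed.

Lemma genP (P : pred nat) v :
  \sum_(i < size (dp e v) | P i) (dp e v)`_i = (\sum_(w | e v w) P (deg e w) : nat)%:R.
Proof.
set f := dp e v.
pose N := maxn (size f) #|T|.+1.
rewrite (big_ord_widen_cond N (fun i => P i) (fun i => f`_i)) ?leq_maxl //.
have -> : \sum_(i < N | P i && (i < size f)%N) f`_i = \sum_(i < N | P i) f`_i.
  rewrite [RHS](bigID (fun i : 'I_N => (i < size f)%N)) /=.
  rewrite [X in _ = _ + X]big1 ?addr0 //.
  by move=> i /andP[_ hi]; rewrite nth_default // leqNgt.
rewrite /f; transitivity (\sum_(i < N | P i) \sum_(w | e v w) ((i : nat) == deg e w)%:R : int).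
  by apply: eq_bigr => i _; rewrite coef_dp.
rewrite exchange_big /= natr_sum; apply: eq_bigr => w _.
have hw : (deg e w < N)%N by apply: leq_trans (deg_lt w) (leq_maxr _ _).
rewrite big_mkcond (bigD1 (Ordinal hw)) //= eqxx big1 ?addr0.
  by case: (P _).
move=> i hi; case: (P i) => //; case: eqP => // h.
by case/eqP: hi; apply: val_inj.
Qed.

Lemma sc_dp v : sc (dp e v) = (deg e v)%:R.
Proof. by rewrite /sc (genP xpredT) deg_sum. Qed.

Lemma sec_dp v : sec (dp e v) = (\sum_(w | e v w) ~~ odd (deg e w) : nat)%:R.
Proof. by rewrite /sec (genP (fun i => ~~ odd i)). Qed.


Lemma conv (P Q : pred T) :
  (\sum_(v | P v) \sum_(w | e v w) (Q w : nat) =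
   \sum_v \sum_w (P v && e v w && Q w : nat))%N.
Proof.
rewrite big_mkcond; apply: eq_bigr => v _; case: (P v) => /=.
  by rewrite big_mkcond; apply: eq_bigr => w _; case: (e v w).
by rewrite big1.
Qed.

Lemma conv_even (P : pred T) :
  (2 %| \sum_(v | P v) \sum_(w | e v w) (P w : nat))%N.
Proof.
rewrite conv; apply: pair_even => [v w|v].
  by rewrite (he.1 v w); case: (P v); case: (P w); case: (e w v).
by rewrite (he.2 v) andbF.
Qed.

Lemma deg_split (Q : pred nat) v :
  deg e v = (\sum_(w | e v w) (Q (deg e w) : nat) + \sum_(w | e v w) (~~ Q (deg e w) : nat))%N.
Proof.
by rewrite deg_sum -big_split; apply: eq_bigr => w _; case: (Q _).
Qed.

Lemma sumdeg_even : (2 %| \sum_v deg e v)%N.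
Proof.
have -> : (\sum_v deg e v = \sum_(v | predT v) \sum_(w | e v w) (predT w : nat))%N.
  by apply: eq_bigr => v _; rewrite deg_sum.
exact: conv_even.
Qed.

End S.

Theorem theorem4p12 (T : finType) (e : rel T) :
  simple_graph e ->
  (forall v : T, exists w : T, e v w) ->
  [/\ (2 %| \sum_(v : T) sc (dp e v))%Z,
      (forall (v : T) (i : nat), (dp e v)`_i != 0 ->
         exists W : {set T}, [/\ v \notin W, (dp e v)`_i = (#|W|)%:Z &
                                 forall w, w \in W -> sc (dp e w) = i%:Z])
    & (2 %| \sum_(v : T | ~~ (2 %| sc (dp e v))%Z) sec (dp e v))%Z
      /\ (2 %| \sum_(v : T | (2 %| sc (dp e v))%Z) sec (dp e v))%Z].
Proof.
move=> he _; split.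
- under eq_bigr do rewrite sc_dp.
  by rewrite -natr_sum natz dvd2z sumdeg_even.
- move=> v i _; exists [set w | e v w & deg e w == i]; split.
  + by rewrite inE (he.2 v).
  + rewrite coef_dp -sum1_card -natz natr_sum [LHS]big_mkcond [RHS]big_mkcond.
    apply: eq_bigr => w _; rewrite !inE eq_sym.
    by case: (e v w); case: (deg e w == i).
  + by move=> w; rewrite inE sc_dp => /andP[_ /eqP ->]; rewrite natz.
- split.
  + under eq_bigl do rewrite sc_dp natz dvd2z dvdn2 negbK.
    under eq_bigr do rewrite sec_dp.
    rewrite -natr_sum natz dvd2z.
    have h1 := @sumdeg_even T e he.
    rewrite (bigID (fun v => odd (deg e v))) /= dvdn_addl in h1; last first.
      by apply: dvdn_sum => v hv; rewrite dvdn2.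
    have h2 : (\sum_(v | odd (deg e v)) deg e v =
       \sum_(v | odd (deg e v)) \sum_(w | e v w) (odd (deg e w) : nat) +
       \sum_(v | odd (deg e v)) \sum_(w | e v w) (~~ odd (deg e w) : nat))%N.
      by rewrite -big_split; apply: eq_bigr => v _; rewrite (@deg_split T e odd).
    by rewrite h2 dvdn_addr in h1 => //; exact: (@conv_even T e he (fun w => odd (deg e w))).
  + under eq_bigl do rewrite sc_dp natz dvd2z dvdn2.
    under eq_bigr do rewrite sec_dp.
    rewrite -natr_sum natz dvd2z.
    exact: (@conv_even T e he (fun w => ~~ odd (deg e w))).
Qed.
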